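(* Let $\chi:\mathbb{R}\to\mathbb{R}$ be a kernel satisfying $(\chi_1)$ and $(\chi_2)$, and let $f\in AC(\mathbb{R})$. Then for every $w>0$, every $m\in\mathbb{N}$ with $m\ge1$, and every $t\in\mathbb{R}$, $$(\bar S^m_w f)'(t)=\frac1m\sum_{i=1}^m (K_w f')\left(t-\frac{m-2(i-1)}{2w}\right).$$
   Context: For $f:\mathbb{R}\to\mathbb{R}$, $V[f]$ denotes the Jordan variation of $f$ over $\mathbb{R}$ (supremum over compact intervals $[a,b]$ of the supremum over partitions $a=x_0<\dots<x_n=b$ of $\sum_i|f(x_i)-f(x_{i-1})|$); $BV(\mathbb{R})=\{f: V[f]<\infty\}$; $AC(\mathbb{R}):=BV(\mathbb{R})\cap AC_{loc}(\mathbb{R})$, where $AC_{loc}(\mathbb{R})$ is the set of functions absolutely continuous on every compact interval. A kernel $\chi:\mathbb{R}\to\mathbb{R}$ satisfies: $(\chi_1)$ $\chi\in L^1(\mathbb{R})$ is continuous and $\sum_{k\in\mathbb{Z}}\chi(u-k)=1$ for all $u\in\mathbb{R}$; $(\chi_2)$ $\sup_{u\in\mathbb{R}}\sum_{k\in\mathbb{Z}}|\chi(u-k)|<+\infty$, the series converging uniformly on compact sets. The averaged kernel is $\bar\chi_m(t):=\frac1m\int_{-m/2}^{m/2}\chi(t+v)\,dv$, and $(\bar S^m_w f)(t):=\sum_{k\in\mathbb{Z}} f(k/w)\,\bar\chi_m(wt-k)$, $t\in\mathbb{R}$, $w>0$. The sampling Kantorovich operators based on $\chi$ are $(K_w g)(t):=\sum_{k\in\mathbb{Z}}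 w\left(\int_{k/w}^{(k+1)/w} g(u)\,du\right)\chi(wt-k)$, $t\in\mathbb{R}$, $w>0$, for locally integrable $g$. *)

(* Defs.v *)
From Stdlib Require Import Reals Lra Lia ZArith Classical ClassicalEpsilon.
Open Scope R_scope.

Fixpoint rsum (a : nat -> R) (n : nat) : R :=
  match n with O => 0 | S n' => rsum a n' + a n' end.

(* symmetric partial sum  sum_{k=-N}^{N} a k *)
Definition zpart (a : Z -> R) (N : nat) : R :=
  rsum (fun i => a (Z.of_nat i - Z.of_nat N)%Z) (2 * N + 1).

Definition has_zsum (a : Z -> R) (l : R) : Prop := Un_cv (zpart a) l.

Definition zsum (a : Z -> R) : R :=
  epsilon (inhabits 0) (fun l => has_zsum a l).

(* ---------- Integral on [a,b] (Henstock-Kurzweil / gauge integral;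
   it extends the Lebesgue integral on compact intervals) ---------- *)
Definition is_gauge_integral (f : R -> R) (a b I : R) : Prop :=
  a <= b /\
  forall eps, 0 < eps ->
  exists delta : R -> R, (forall x, 0 < delta x) /\
    forall (n : nat) (x tg : nat -> R),
      x 0%nat = a -> x n = b ->
      (forall i, (i < n)%nat -> x i <= tg i <= x (S i)) ->
      (forall i, (i < n)%nat ->
          tg i - delta (tg i) < x i /\ x (S i) < tg i + delta (tg i)) ->
      Rabs (rsum (fun i => f (tg i) * (x (S i) - x i)) n - I) < eps.

Definition gint (f : R -> R) (a b : R) : R :=
  epsilon (inhabits 0) (fun I => is_gauge_integral f a b I).

(* chi in L^1(R), for continuous chi: sup of integrals of |chi| on compacts *)
Definition L1_cont (chi : R -> R) : Prop :=
  exists M, forall a b, a <= b ->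
    exists I, is_gauge_integral (fun x => Rabs (chi x)) a b I /\ I <= M.

Definition BV (f : R -> R) : Prop :=
  exists M, forall (n : nat) (x : nat -> R),
    (forall i, (i < n)%nat -> x i < x (S i)) ->
    rsum (fun i => Rabs (f (x (S i)) - f (x i))) n <= M.

Definition AC_loc (f : R -> R) : Prop :=
  forall a b, a <= b -> forall eps, 0 < eps ->
  exists delta, 0 < delta /\
    forall (n : nat) (aa bb : nat -> R),
      (forall i, (i < n)%nat -> a <= aa i /\ aa i <= bb i /\ bb i <= b) ->
      (forall i, (S i < n)%nat -> bb i <= aa (S i)) ->
      rsum (fun i => bb i - aa i) n < delta ->
      rsum (fun i => Rabs (f (bb i) - f (aa i))) n < eps.

Definition AC (f : R -> R) : Prop := BV f /\ AC_loc f.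

Definition null_set (E : R -> Prop) : Prop :=
  forall eps, 0 < eps ->
  exists a b : nat -> R,
    (forall n, a n <= b n) /\
    (forall x, E x -> exists n, a n < x < b n) /\
    (forall N, rsum (fun n => b n - a n) N <= eps).

Definition ae_derivative (f g : R -> R) : Prop :=
  exists E, null_set E /\ forall x, ~ E x -> derivable_pt_lim f x (g x).

Definition chi1 (chi : R -> R) : Prop :=
  continuity chi /\ L1_cont chi /\
  forall u, has_zsum (fun k => chi (u - IZR k)) 1.

Definition chi2 (chi : R -> R) : Prop :=
  (exists M, forall u N, zpart (fun k => Rabs (chi (u - IZR k))) N <= M) /\
  (* uniform convergence on compact sets (uniform Cauchy criterion) *)
  (forall a b eps, 0 < eps -> exists N0, forall N1 N2 u,
      (N0 <= N1)%nat -> (N0 <= N2)%nat -> a <= u <= b ->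
      Rabs (zpart (fun k => Rabs (chi (u - IZR k))) N1
            - zpart (fun k => Rabs (chi (u - IZR k))) N2) < eps).

Definition chibar (chi : R -> R) (m : nat) (t : R) : R :=
  / INR m * gint (fun v => chi (t + v)) (- (INR m) / 2) (INR m / 2).

Definition Sbar (chi : R -> R) (m : nat) (w : R) (f : R -> R) (t : R) : R :=
  zsum (fun k => f (IZR k / w) * chibar chi m (w * t - IZR k)).

Definition Kw (chi : R -> R) (w : R) (g : R -> R) (t : R) : R :=
  zsum (fun k => w * gint g (IZR k / w) ((IZR k + 1) / w) * chi (w * t - IZR k)).

(* Main.v *)
Require Import Defs.
From Stdlib Require Import Reals.
From Stdlib Require Import Lra Lia ZArith Classical ClassicalEpsilon FunctionalExtensionality.
From Coquelicot Require Coquelicot.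
Open Scope R_scope.

Module PhiM.
Import Coquelicot.Coquelicot.
Lemma antideriv (chi : R -> R) : continuity chi ->
  exists Phi : R -> R, forall x, derivable_pt_lim Phi x (chi x).
Proof.
  intros Hc. exists (RInt chi 0). intro x.
  apply is_derive_Reals.
  apply (is_derive_RInt chi (RInt chi 0) 0).
  - apply (filter_forall (fun b => is_RInt chi 0 b (RInt chi 0 b))). intro b.
    apply (@RInt_correct R_CompleteNormedModule). apply (@ex_RInt_continuous R_CompleteNormedModule).
    intros z _. apply continuity_pt_filterlim. apply Hc.
  - apply continuity_pt_filterlim. apply Hc.
Qed.
End PhiM.

Lemma rsum_ext a b n : (forall i, (i < n)%nat -> a i = b i) -> rsum a n = rsum b n.
Proof. induction n; intros H; simpl; auto. rewrite IHn by (intros; apply H; lia). rewrite H by lia. reflexivity. Qed.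

Lemma rsum_plus a b n : rsum (fun i => a i + b i) n = rsum a n + rsum b n.
Proof. induction n; simpl; [lra|rewrite IHn; lra]. Qed.
Lemma rsum_minus a b n : rsum (fun i => a i - b i) n = rsum a n - rsum b n.
Proof. induction n; simpl; [lra|rewrite IHn; lra]. Qed.
Lemma rsum_scal c a n : rsum (fun i => c * a i) n = c * rsum a n.
Proof. induction n; simpl; [lra|rewrite IHn; lra]. Qed.
Lemma rsum_le a b n : (forall i, (i < n)%nat -> a i <= b i) -> rsum a n <= rsum b n.
Proof. induction n; intros H; simpl; [lra|]. assert (a n <= b n) by (apply H; lia).
 assert (rsum a n <= rsum b n) by (apply IHn; intros; apply H; lia). lra. Qed.
Lemma rsum_abs a n : Rabs (rsum a n) <= rsum (fun i => Rabs (a i)) n.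
Proof. induction n; simpl. rewrite Rabs_R0; lra.
 eapply Rle_trans. apply Rabs_triang. lra. Qed.
Lemma rsum_shift a n : rsum a (S n) = a O + rsum (fun i => a (S i)) n.
Proof. induction n. simpl; lra. change (rsum a (S (S n))) with (rsum a (S n) + a (S n)).
 rewrite IHn. simpl. lra. Qed.
Lemma rsum_0 n : rsum (fun _ => 0) n = 0.
Proof. induction n; simpl; [lra|rewrite IHn; lra]. Qed.
Lemma rsum_tele a n : rsum (fun i => a (S i) - a i) n = a n - a O.
Proof. induction n; simpl; [lra|rewrite IHn; lra]. Qed.

Lemma zpart_S a N : zpart a (S N) = zpart a N + a (Z.of_nat (S N)) + a (- Z.of_nat (S N))%Z.
Proof.
  unfold zpart. replace (2 * S N + 1)%nat with (S (S (2 * N + 1))) by lia.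
  change (rsum (fun i => a (Z.of_nat i - Z.of_nat (S N))%Z) (S (S (2 * N + 1))))
    with (rsum (fun i => a (Z.of_nat i - Z.of_nat (S N))%Z) (S (2 * N + 1)) +
          a (Z.of_nat (S (2 * N + 1)) - Z.of_nat (S N))%Z).
  rewrite rsum_shift.
  rewrite (rsum_ext (fun i => a (Z.of_nat (S i) - Z.of_nat (S N))%Z)
                    (fun i => a (Z.of_nat i - Z.of_nat N)%Z)).
  2:{ intros i _. f_equal. lia. }
  replace (Z.of_nat (S (2 * N + 1)) - Z.of_nat (S N))%Z with (Z.of_nat (S N)) by lia.
  replace (Z.of_nat 0 - Z.of_nat (S N))%Z with (- Z.of_nat (S N))%Z by lia. lra.
Qed.

Lemma zpart_plus a b N : zpart (fun k => a k + b k) N = zpart a N + zpart b N.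
Proof. unfold zpart. apply rsum_plus. Qed.
Lemma zpart_minus a b N : zpart (fun k => a k - b k) N = zpart a N - zpart b N.
Proof. unfold zpart. apply rsum_minus. Qed.
Lemma zpart_scal c a N : zpart (fun k => c * a k) N = c * zpart a N.
Proof. unfold zpart. apply rsum_scal. Qed.
Lemma zpart_ext a b N : (forall k, a k = b k) -> zpart a N = zpart b N.
Proof. intros H. unfold zpart. apply rsum_ext. intros; apply H. Qed.

Lemma zpart_shell a b N1 d : (forall k, Rabs (a k) <= b k) ->
  Rabs (zpart a (N1 + d) - zpart a N1) <= zpart b (N1 + d) - zpart b N1.
Proof.
  intros H. induction d.
  - rewrite Nat.add_0_r. replace (zpart a N1 - zpart a N1) with 0 by ring. rewrite Rabs_R0. lra.
  - rewrite Nat.add_succ_r, !zpart_S.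
    pose proof (H (Z.of_nat (S (N1 + d)))). pose proof (H (- Z.of_nat (S (N1 + d)))%Z).
    pose proof (Rabs_triang (zpart a (N1 + d) - zpart a N1) (a (Z.of_nat (S (N1 + d))) + a (- Z.of_nat (S (N1 + d)))%Z)).
    pose proof (Rabs_triang (a (Z.of_nat (S (N1 + d)))) (a (- Z.of_nat (S (N1 + d)))%Z)).
    replace (zpart a (N1 + d) + a (Z.of_nat (S (N1 + d))) + a (- Z.of_nat (S (N1 + d)))%Z - zpart a N1)
      with (zpart a (N1 + d) - zpart a N1 + (a (Z.of_nat (S (N1 + d))) + a (- Z.of_nat (S (N1 + d)))%Z)) by ring.
    lra.
Qed.

Lemma zpart_shell' a b N1 N2 : (forall k, Rabs (a k) <= b k) -> (N1 <= N2)%nat ->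
  Rabs (zpart a N2 - zpart a N1) <= zpart b N2 - zpart b N1.
Proof. intros H Hle. replace N2 with (N1 + (N2 - N1))%nat by lia. apply zpart_shell; auto. Qed.

Lemma zsum_unique a l : has_zsum a l -> zsum a = l.
Proof.
  intros H. unfold zsum. apply (UL_sequence (zpart a)); [|exact H].
  apply (epsilon_spec (inhabits 0) (fun l => has_zsum a l)). exists l; exact H.
Qed.

Definition fine (d : R -> R) n (x tg : nat -> R) :=
  (forall i, (i < n)%nat -> x i <= tg i <= x (S i)) /\
  (forall i, (i < n)%nat -> tg i - d (tg i) < x i /\ x (S i) < tg i + d (tg i)).

Lemma extend d n x tg a y z s : x O = a -> x n = y -> fine d n x tg ->
  y <= s <= z -> s - d s < y -> z < s + d s ->
  exists x' tg', x' O = a /\ x' (S n) = z /\ fine d (S n) x' tg'.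
Proof.
  intros H0 Hn [F1 F2] Hs Hl Hr.
  exists (fun i => if Nat.leb i n then x i else z).
  exists (fun i => if Nat.ltb i n then tg i else s).
  split; [simpl; auto|]. split.
  { destruct (Nat.leb_spec (S n) n); [lia|auto]. }
  split; intros i Hi.
  - destruct (Nat.leb_spec i n); [|lia]. destruct (Nat.leb_spec (S i) n);
    destruct (Nat.ltb_spec i n); try lia.
    + apply F1; lia.
    + assert (i = n) by lia. subst i. rewrite Hn. lra.
  - destruct (Nat.leb_spec i n); [|lia]. destruct (Nat.leb_spec (S i) n);
    destruct (Nat.ltb_spec i n); try lia.
    + apply F2; lia.
    + assert (i = n) by lia. subst i. rewrite Hn. lra.
Qed.

Lemma cousin a b d : a <= b -> (forall x, 0 < d x) ->
  exists n x tg, x O = a /\ x n = b /\ fine d n x tg.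
Proof.
  intros Hab Hd.
  set (S := fun y => a <= y <= b /\ exists n x tg, x O = a /\ x n = y /\ fine d n x tg).
  assert (HS0 : S a).
  { split; [lra|]. exists O, (fun _ => a), (fun _ => a). split; auto. split; auto.
    split; intros; lia. }
  destruct (completeness S) as [s [Hub Hlub]].
  { exists b. intros y [Hy _]. lra. }
  { exists a; auto. }
  assert (Has : a <= s) by (apply Hub; auto).
  assert (Hsb : s <= b) by (apply Hlub; intros y [Hy _]; lra).
  assert (Hex : exists y, S y /\ s - d s < y).
  { apply NNPP. intro Hn. assert (s <= s - d s).
    { apply Hlub. intros y Hy. apply Rnot_lt_le. intro Hc. apply Hn. exists y; auto. }
    specialize (Hd s). lra. }
  destruct Hex as [y [[Hy [n [x [tg [H0 [Hn Hf]]]]]] Hys]].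
  assert (Hyle : y <= s) by (apply Hub; split; [lra| exists n, x, tg; auto]).
  set (z := Rmin b (s + d s / 2)).
  assert (Hd' := Hd s).
  assert (Hz1 : s <= z) by (unfold z, Rmin; destruct Rle_dec; lra).
  assert (Hz2 : z < s + d s) by (unfold z, Rmin; destruct Rle_dec; lra).
  destruct (extend d n x tg a y z s H0 Hn Hf) as [x' [tg' [H0' [Hn' Hf']]]]; try lra.
  assert (Sz : S z).
  { split. split; [lra|]. unfold z, Rmin; destruct Rle_dec; lra.
    exists (Datatypes.S n), x', tg'. auto. }
  assert (z <= s) by (apply Hub; auto).
  assert (z = b).
  { unfold z, Rmin in *; destruct Rle_dec; lra. }
  exists (Datatypes.S n), x', tg'. split; auto. split; [congruence|auto].
Qed.

Lemma gauge_unique h a b I1 I2 :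
  is_gauge_integral h a b I1 -> is_gauge_integral h a b I2 -> I1 = I2.
Proof.
  intros [Hab H1] [_ H2].
  apply NNPP. intro Hne.
  set (e := Rabs (I1 - I2) / 2).
  assert (He : 0 < e) by (unfold e; assert (0 < Rabs (I1 - I2)) by (apply Rabs_pos_lt; lra); lra).
  destruct (H1 e He) as [d1 [Hd1 P1]]. destruct (H2 e He) as [d2 [Hd2 P2]].
  destruct (cousin a b (fun x => Rmin (d1 x) (d2 x)) Hab) as [n [x [tg [H0 [Hn [F1 F2]]]]]].
  { intros x. apply Rmin_pos; auto. }
  assert (A1 := P1 n x tg H0 Hn F1).
  assert (A2 := P2 n x tg H0 Hn F1).
  assert (B1 : Rabs (rsum (fun i => h (tg i) * (x (S i) - x i)) n - I1) < e).
  { apply A1. intros i Hi. destruct (F2 i Hi). pose proof (Rmin_l (d1 (tg i)) (d2 (tg i))). lra. }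
  assert (B2 : Rabs (rsum (fun i => h (tg i) * (x (S i) - x i)) n - I2) < e).
  { apply A2. intros i Hi. destruct (F2 i Hi). pose proof (Rmin_r (d1 (tg i)) (d2 (tg i))). lra. }
  set (sm := rsum (fun i => h (tg i) * (x (S i) - x i)) n) in *.
  assert (Rabs (I1 - I2) <= Rabs (sm - I1) + Rabs (sm - I2)).
  { replace (I1 - I2) with (-(sm - I1) + (sm - I2)) by ring.
    eapply Rle_trans. apply Rabs_triang. rewrite Rabs_Ropp. lra. }
  unfold e in *. lra.
Qed.

Lemma gint_eq h a b I : is_gauge_integral h a b I -> gint h a b = I.
Proof.
  intros H. unfold gint. apply (gauge_unique h a b); auto.
  apply (epsilon_spec (inhabits 0) (fun I => is_gauge_integral h a b I)). exists I; auto.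
Qed.

Lemma my_choice {A B : Type} (P : A -> B -> Prop) :
  (forall x, exists y, P x y) -> exists f : A -> B, forall x, P x (f x).
Proof.
  intros H. exists (fun x => proj1_sig (constructive_indefinite_description _ (H x))).
  intro x. exact (proj2_sig (constructive_indefinite_description _ (H x))).
Qed.

Definition Ind (E : R -> Prop) (x : R) : R :=
  if excluded_middle_informative (E x) then 1 else 0.

Lemma Ind_cases E x : (E x /\ Ind E x = 1) \/ (~ E x /\ Ind E x = 0).
Proof. unfold Ind. destruct excluded_middle_informative; auto. Qed.

Lemma G0 p (x c : nat -> R) a b :
  (forall i, (i < p)%nat -> x i <= x (S i)) ->
  (forall i, (i < p)%nat -> c i = 0 \/ (c i = 1 /\ a <= x i /\ x (S i) <= b)) ->
  rsum (fun i => c i * (x (S i) - x i)) p <= Rmax 0 (Rmin b (x p) - a).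
Proof.
  induction p; intros Hm Hc; simpl.
  - unfold Rmax; destruct Rle_dec; lra.
  - assert (IH := IHp (fun i Hi => Hm i ltac:(lia)) (fun i Hi => Hc i ltac:(lia))).
    assert (Hp := Hm p ltac:(lia)).
    destruct (Hc p ltac:(lia)) as [H0 | [H1 [Ha Hb]]].
    + rewrite H0. revert IH. unfold Rmax, Rmin; repeat destruct Rle_dec; lra.
    + rewrite H1. revert IH. unfold Rmax, Rmin; repeat destruct Rle_dec; lra.
Qed.

Lemma G2 N p (x c : nat -> R) (A B : nat -> R) (nn : nat -> nat) :
  (forall n, A n <= B n) ->
  (forall i, (i < p)%nat -> x i <= x (S i)) ->
  (forall i, (i < p)%nat -> c i = 0 \/
      (c i = 1 /\ (nn i < N)%nat /\ A (nn i) <= x i /\ x (S i) <= B (nn i))) ->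
  rsum (fun i => c i * (x (S i) - x i)) p <= rsum (fun n => B n - A n) N.
Proof.
  revert c. induction N; intros c HAB Hm Hc.
  - simpl. rewrite (rsum_ext _ (fun _ => 0)). rewrite rsum_0; lra.
    intros i Hi. destruct (Hc i Hi) as [H|[_ [H _]]]; [rewrite H; ring|lia].
  - rewrite (rsum_ext _ (fun i => (if Nat.eqb (nn i) N then c i else 0) * (x (S i) - x i)
                               + (if Nat.eqb (nn i) N then 0 else c i) * (x (S i) - x i))).
    2:{ intros i _. destruct (Nat.eqb (nn i) N); ring. }
    rewrite rsum_plus. simpl.
    assert (H1 : rsum (fun i => (if Nat.eqb (nn i) N then c i else 0) * (x (S i) - x i)) p
                 <= B N - A N).
    { eapply Rle_trans. apply (G0 p x _ (A N) (B N)); auto.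
      - intros i Hi. destruct (Nat.eqb_spec (nn i) N); [|auto].
        destruct (Hc i Hi) as [H|[H [_ [Ha Hb]]]]; auto. subst N. auto.
      - specialize (HAB N). unfold Rmax, Rmin; repeat destruct Rle_dec; lra. }
    assert (H2 : rsum (fun i => (if Nat.eqb (nn i) N then 0 else c i) * (x (S i) - x i)) p
                 <= rsum (fun n => B n - A n) N).
    { apply IHN; auto. intros i Hi. destruct (Nat.eqb_spec (nn i) N); [auto|].
      destruct (Hc i Hi) as [H|[H [Hl [Ha Hb]]]]; auto. right. repeat split; auto. lia. }
    lra.
Qed.

Lemma fin_bound (u : nat -> nat) p : exists N, forall i, (i < p)%nat -> (u i < N)%nat.
Proof.
  induction p. exists O; intros; lia.
  destruct IHp as [N HN]. exists (Nat.max N (S (u p))). intros i Hi.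
  destruct (Nat.eq_dec i p). subst; lia. specialize (HN i ltac:(lia)). lia.
Qed.

Lemma geom_sum eps K : rsum (fun k => eps / 2 ^ S k) K = eps - eps / 2 ^ K.
Proof.
  induction K. simpl; field.
  change (rsum (fun k => eps / 2 ^ S k) (S K)) with (rsum (fun k => eps / 2 ^ S k) K + eps / 2 ^ S K).
  rewrite IHK. simpl. field. apply pow_nonzero. lra.
Qed.

Lemma null_weighted E h eps : null_set E -> 0 < eps ->
  exists d, (forall x, 0 < d x) /\ forall n x tg, fine d n x tg ->
    rsum (fun i => Ind E (tg i) * Rabs (h (tg i)) * (x (S i) - x i)) n <= eps.
Proof.
  intros HE Heps.
  set (ek := fun k : nat => eps / (2 ^ S k * (INR k + 1))).
  assert (Hek : forall k, 0 < ek k).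
  { intro k. unfold ek. apply Rdiv_lt_0_compat; auto. apply Rmult_lt_0_compat.
    apply pow_lt; lra. pose proof (pos_INR k); lra. }
  destruct (my_choice (fun (k : nat) (ab : (nat -> R) * (nat -> R)) =>
     (forall n, fst ab n <= snd ab n) /\ (forall x, E x -> exists n, fst ab n < x < snd ab n) /\
     (forall N, rsum (fun n => snd ab n - fst ab n) N <= ek k))) as [cov Hcov].
  { intro k. destruct (HE (ek k) (Hek k)) as [a [b [H1 [H2 H3]]]]. exists (a, b). auto. }
  destruct (my_choice (fun (x : R) (k : nat) => Rabs (h x) <= INR k)) as [K HK].
  { intro x. exists (Z.to_nat (up (Rabs (h x)))). destruct (archimed (Rabs (h x))) as [H1 _].
    pose proof (Rabs_pos (h x)). assert (0 <= up (Rabs (h x)))%Z.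
    { apply le_IZR. lra. }
    rewrite INR_IZR_INZ, Z2Nat.id by assumption; lra. }
  destruct (my_choice (fun (x : R) (n : nat) => E x ->
      fst (cov (K x)) n < x < snd (cov (K x)) n)) as [nn Hnn].
  { intro x. destruct (classic (E x)) as [Hx|Hx].
    - destruct (proj1 (proj2 (Hcov (K x))) x Hx) as [n Hn]. exists n; auto.
    - exists O; tauto. }
  destruct (my_choice (fun (x : R) (d : R) => 0 < d /\ (E x ->
      fst (cov (K x)) (nn x) <= x - d /\ x + d <= snd (cov (K x)) (nn x)))) as [d Hd].
  { intro x. destruct (classic (E x)) as [Hx|Hx].
    - destruct (Hnn x Hx). exists (Rmin (x - fst (cov (K x)) (nn x)) (snd (cov (K x)) (nn x) - x)).
      split. apply Rmin_pos; lra. intros _.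
      pose proof (Rmin_l (x - fst (cov (K x)) (nn x)) (snd (cov (K x)) (nn x) - x)).
      pose proof (Rmin_r (x - fst (cov (K x)) (nn x)) (snd (cov (K x)) (nn x) - x)). lra.
    - exists 1. split; [lra|tauto]. }
  exists d. split; [intro x; apply Hd|].
  intros n x tg [F1 F2].
  assert (Hm : forall i, (i < n)%nat -> x i <= x (S i)).
  { intros i Hi. destruct (F1 i Hi); lra. }
  assert (G1 : forall k, rsum (fun i => (if Nat.eqb (K (tg i)) k then Ind E (tg i) else 0)
                  * (x (S i) - x i)) n <= ek k).
  { intro k. destruct (fin_bound (fun i => nn (tg i)) n) as [N HN].
    eapply Rle_trans.
    apply (G2 N n x _ (fst (cov k)) (snd (cov k)) (fun i => nn (tg i))); auto.
    - apply Hcov.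
    - intros i Hi. destruct (Nat.eqb_spec (K (tg i)) k); [|auto].
      destruct (Ind_cases E (tg i)) as [[HE1 HI]|[_ HI]]; rewrite HI; auto.
      right. split; auto. split; [apply HN; auto|].
      destruct (proj2 (Hd (tg i)) HE1). subst k. destruct (F2 i Hi). lra.
    - apply Hcov. }
  assert (G3 : forall Km, rsum (fun i => (if Nat.ltb (K (tg i)) Km then Ind E (tg i) else 0)
                * INR (K (tg i)) * (x (S i) - x i)) n <= rsum (fun k => INR k * ek k) Km).
  { induction Km.
    - simpl. rewrite (rsum_ext _ (fun _ => 0)). rewrite rsum_0; lra.
      intros i _. destruct (Nat.ltb_spec (K (tg i)) 0); [lia|ring].
    - rewrite (rsum_ext _ (fun i => (if Nat.ltb (K (tg i)) Km then Ind E (tg i) else 0)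
                * INR (K (tg i)) * (x (S i) - x i) +
                INR Km * ((if Nat.eqb (K (tg i)) Km then Ind E (tg i) else 0) * (x (S i) - x i)))).
      2:{ intros i _. destruct (Nat.ltb_spec (K (tg i)) (S Km)), (Nat.ltb_spec (K (tg i)) Km),
             (Nat.eqb_spec (K (tg i)) Km); try lia; try ring. rewrite e. ring. }
      rewrite rsum_plus, rsum_scal. simpl.
      assert (INR Km * rsum (fun i => (if Nat.eqb (K (tg i)) Km then Ind E (tg i) else 0)
               * (x (S i) - x i)) n <= INR Km * ek Km).
      { apply Rmult_le_compat_l. apply pos_INR. apply G1. }
      lra. }
  destruct (fin_bound (fun i => K (tg i)) n) as [Km HKm].
  eapply Rle_trans. apply (rsum_le _ (fun i => (if Nat.ltb (K (tg i)) Km then Ind E (tg i) else 0)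
                * INR (K (tg i)) * (x (S i) - x i))).
  { intros i Hi. destruct (Nat.ltb_spec (K (tg i)) Km); [|specialize (HKm i Hi); lia].
    assert (0 <= x (S i) - x i) by (specialize (Hm i Hi); lra).
    destruct (Ind_cases E (tg i)) as [[_ HI]|[_ HI]]; rewrite HI.
    - apply Rmult_le_compat_r; auto. rewrite !Rmult_1_l. apply HK.
    - lra. }
  eapply Rle_trans. apply G3.
  eapply Rle_trans. apply (rsum_le _ (fun k => eps / 2 ^ S k)).
  { intros k _. unfold ek. pose proof (pos_INR k). assert (0 < 2 ^ S k) by (apply pow_lt; lra).
    unfold Rdiv. rewrite Rinv_mult. 
    replace (INR k * (eps * (/ 2 ^ S k * / (INR k + 1)))) with
        (eps * / 2 ^ S k * (INR k / (INR k + 1))) by (field; lra).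
    rewrite <- (Rmult_1_r (eps * / 2 ^ S k)) at 2.
    apply Rmult_le_compat_l. apply Rmult_le_pos; [lra| left; apply Rinv_0_lt_compat; lra].
    apply (Rmult_le_reg_r (INR k + 1)); [lra|]. unfold Rdiv. rewrite Rmult_assoc, Rinv_l; lra. }
  rewrite geom_sum. assert (0 < eps / 2 ^ Km) by (apply Rdiv_lt_0_compat; auto; apply pow_lt; lra).
  lra.
Qed.

Definition ACab (F : R -> R) a b := forall eps, 0 < eps ->
  exists delta, 0 < delta /\
    forall (n : nat) (aa bb : nat -> R),
      (forall i, (i < n)%nat -> a <= aa i /\ aa i <= bb i /\ bb i <= b) ->
      (forall i, (S i < n)%nat -> bb i <= aa (S i)) ->
      rsum (fun i => bb i - aa i) n < delta ->
      rsum (fun i => Rabs (F (bb i) - F (aa i))) n < eps.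

Lemma straddle1 F x l e : derivable_pt_lim F x l -> 0 < e ->
  exists d, 0 < d /\ forall z, Rabs (z - x) < d -> Rabs (F z - F x - l * (z - x)) <= e * Rabs (z - x).
Proof.
  intros H He. destruct (H e He) as [dl Hdl]. exists dl. split; [apply cond_pos|].
  intros z Hz. destruct (Req_dec z x) as [->|Hne].
  - replace (F x - F x - l * (x - x)) with 0 by ring. rewrite Rabs_R0, Rminus_diag, Rabs_R0. lra.
  - assert (Hy : z - x <> 0) by lra.
    specialize (Hdl (z - x) Hy Hz). replace (x + (z - x)) with z in Hdl by ring.
    replace (F z - F x - l * (z - x)) with ((z - x) * ((F z - F x) / (z - x) - l)) by (field; auto).
    rewrite Rabs_mult. rewrite Rmult_comm. apply Rmult_le_compat_r. apply Rabs_pos. lra.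
Qed.

Lemma part_mono (x : nat -> R) n : (forall i, (i < n)%nat -> x i <= x (S i)) ->
  forall i j, (i <= j <= n)%nat -> x i <= x j.
Proof.
  intros H i j Hij. induction j. assert (i = O) by lia. subst; lra.
  destruct (Nat.eq_dec i (S j)). subst; lra.
  specialize (IHj ltac:(lia)). specialize (H j ltac:(lia)). lra.
Qed.

Lemma ftc_gauge F h E a b : a <= b -> null_set E ->
  (forall x, ~ E x -> derivable_pt_lim F x (h x)) ->
  ((forall x, ~ E x) \/ ACab F a b) ->
  is_gauge_integral h a b (F b - F a).
Proof.
  intros Hab HE Hder HAC. split; auto. intros eps Heps.
  set (e1 := eps / (4 * (b - a + 1))).
  assert (He1 : 0 < e1) by (unfold e1; apply Rdiv_lt_0_compat; lra).
  destruct (my_choice (fun x d => 0 < d /\ (~ E x -> forall z, Rabs (z - x) < d ->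
      Rabs (F z - F x - h x * (z - x)) <= e1 * Rabs (z - x)))) as [dD HdD].
  { intro x. destruct (classic (E x)) as [Hx|Hx].
    - exists 1. split; [lra|tauto].
    - destruct (straddle1 F x (h x) e1 (Hder x Hx) He1) as [d [Hd Hd']]. exists d; auto. }
  destruct (null_weighted E h (eps / 4) HE ltac:(lra)) as [dN [HdN PN]].
  assert (HA : exists dA, (forall x, 0 < dA x) /\ forall n x tg, fine dA n x tg -> x O = a -> x n = b ->
     rsum (fun i => Ind E (tg i) * Rabs (F (x (S i)) - F (x i))) n <= eps / 4).
  { destruct HAC as [HnE | Hac].
    - exists (fun _ => 1). split; [intros; lra|]. intros n x tg _ _ _.
      rewrite (rsum_ext _ (fun _ => 0)). rewrite rsum_0; lra.
      intros i _. destruct (Ind_cases E (tg i)) as [[Hx _]|[_ ->]]; [exfalso; eapply HnE; eauto|ring].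
    - destruct (Hac (eps / 4) ltac:(lra)) as [eta [Heta Peta]].
      destruct (null_weighted E (fun _ => 1) (eta / 2) HE ltac:(lra)) as [dA [HdA PA]].
      exists dA. split; auto. intros n x tg Hf H0 Hn.
      assert (Hm : forall i, (i < n)%nat -> x i <= x (S i)) by (intros i Hi; destruct (proj1 Hf i Hi); lra).
      specialize (PA n x tg Hf).
      left.
      rewrite (rsum_ext _ (fun i => Rabs (F (x i + Ind E (tg i) * (x (S i) - x i)) - F (x i)))).
      2:{ intros i _. destruct (Ind_cases E (tg i)) as [[_ ->]|[_ ->]].
          replace (x i + 1 * (x (S i) - x i)) with (x (S i)) by ring. ring.
          replace (x i + 0 * (x (S i) - x i)) with (x i) by ring.
          replace (F (x i) - F (x i)) with 0 by ring. rewrite Rabs_R0. ring. }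
      apply Peta.
      + intros i Hi. pose proof (part_mono x n Hm O i ltac:(lia)).
        pose proof (part_mono x n Hm (S i) n ltac:(lia)). specialize (Hm i Hi).
        destruct (Ind_cases E (tg i)) as [[_ ->]|[_ ->]]; lra.
      + intros i Hi. specialize (Hm i ltac:(lia)).
        destruct (Ind_cases E (tg i)) as [[_ ->]|[_ ->]]; lra.
      + rewrite (rsum_ext _ (fun i => Ind E (tg i) * Rabs ((fun _ => 1) (tg i)) * (x (S i) - x i))).
        lra. intros i _. rewrite Rabs_R1. ring. }
  destruct HA as [dA [HdA PA]].
  exists (fun x => Rmin (dD x) (Rmin (dN x) (dA x))). split.
  { intro x. apply Rmin_pos. apply HdD. apply Rmin_pos; auto. }
  intros n x tg H0 Hn F1 F2.
  assert (Hfd : forall d, (forall y, Rmin (dD y) (Rmin (dN y) (dA y)) <= d y) -> fine d n x tg).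
  { intros d Hd. split; auto. intros i Hi. destruct (F2 i Hi). specialize (Hd (tg i)). lra. }
  assert (FN := PN n x tg (Hfd dN ltac:(intro y; eapply Rle_trans; [apply Rmin_r|apply Rmin_l]))).
  assert (FA := PA n x tg (Hfd dA ltac:(intro y; eapply Rle_trans; [apply Rmin_r|apply Rmin_r])) H0 Hn).
  assert (Hm : forall i, (i < n)%nat -> x i <= x (S i)) by (intros i Hi; destruct (F1 i Hi); lra).
  replace (rsum (fun i => h (tg i) * (x (S i) - x i)) n - (F b - F a)) with
     (rsum (fun i => h (tg i) * (x (S i) - x i) - (F (x (S i)) - F (x i))) n).
  2:{ rewrite rsum_minus. rewrite (rsum_tele (fun i => F (x i))). rewrite H0, Hn. ring. }
  eapply Rle_lt_trans. apply rsum_abs.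
  eapply Rle_lt_trans. apply (rsum_le _ (fun i => e1 * (x (S i) - x i) +
      (Ind E (tg i) * Rabs (h (tg i)) * (x (S i) - x i) + Ind E (tg i) * Rabs (F (x (S i)) - F (x i))))).
  { intros i Hi. specialize (Hm i Hi). destruct (F1 i Hi). destruct (F2 i Hi).
    destruct (Ind_cases E (tg i)) as [[_ ->]|[HnE ->]].
    - replace (h (tg i) * (x (S i) - x i) - (F (x (S i)) - F (x i))) with
        (h (tg i) * (x (S i) - x i) + - (F (x (S i)) - F (x i))) by ring.
      eapply Rle_trans. apply Rabs_triang. rewrite Rabs_Ropp, Rabs_mult.
      rewrite (Rabs_right (x (S i) - x i)) by lra. nra.
    - pose proof (Rmin_l (dD (tg i)) (Rmin (dN (tg i)) (dA (tg i)))).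
      destruct (HdD (tg i)) as [_ P].
      assert (P1 := P HnE (x (S i)) ltac:(apply Rabs_def1; lra)).
      assert (P2 := P HnE (x i) ltac:(apply Rabs_def1; lra)).
      rewrite (Rabs_right (x (S i) - tg i)) in P1 by lra.
      rewrite (Rabs_left1 (x i - tg i)) in P2 by lra.
      replace (h (tg i) * (x (S i) - x i) - (F (x (S i)) - F (x i))) with
        (- (F (x (S i)) - F (tg i) - h (tg i) * (x (S i) - tg i)) + (F (x i) - F (tg i) - h (tg i) * (x i - tg i))) by ring.
      eapply Rle_trans. apply Rabs_triang. rewrite Rabs_Ropp. nra. }
  rewrite !rsum_plus, rsum_scal, (rsum_tele x), H0, Hn.
  assert (e1 * (b - a) < eps / 4).
  { unfold e1. apply (Rmult_lt_reg_r (4 * (b - a + 1))); [lra|].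
    unfold Rdiv. field_simplify; lra. }
  lra.
Qed.

Lemma dpl_ext f1 f2 x l : (forall y, f1 y = f2 y) -> derivable_pt_lim f1 x l -> derivable_pt_lim f2 x l.
Proof. intros H. assert (f1 = f2) by (apply functional_extensionality; auto). subst; auto. Qed.

Lemma dpl_affine G G' al be v : (forall x, derivable_pt_lim G x (G' x)) ->
  derivable_pt_lim (fun y => G (al * y + be)) v (G' (al * v + be) * al).
Proof.
  intros H. apply (derivable_pt_lim_comp (fun y => al * y + be) G v al).
  - assert (Hd : derivable_pt_lim (mult_real_fct al id + fct_cte be)%F v (al * 1 + 0)).
    { apply derivable_pt_lim_plus. apply derivable_pt_lim_scal, derivable_pt_lim_id.
      apply derivable_pt_lim_const. }
    rewrite Rmult_1_r, Rplus_0_r in Hd. revert Hd. apply dpl_ext. intro y; reflexivity.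
  - apply H.
Qed.

Lemma dpl_rsum (Fi : nat -> R -> R) (Fi' : nat -> R) x n :
  (forall i, derivable_pt_lim (Fi i) x (Fi' i)) ->
  derivable_pt_lim (fun y => rsum (fun i => Fi i y) n) x (rsum Fi' n).
Proof.
  intros H. induction n; simpl.
  - apply (dpl_ext (fct_cte 0)). intro; reflexivity. apply derivable_pt_lim_const.
  - apply (dpl_ext ((fun y => rsum (fun i => Fi i y) n) + Fi n)%F). intro; reflexivity.
    apply derivable_pt_lim_plus; auto.
Qed.

Lemma dpl_zpart (a : Z -> R -> R) (a' : Z -> R) x N :
  (forall k, derivable_pt_lim (a k) x (a' k)) ->
  derivable_pt_lim (fun y => zpart (fun k => a k y) N) x (zpart a' N).
Proof. intros H. unfold zpart. apply (dpl_rsum (fun i => a (Z.of_nat i - Z.of_nat N)%Z)). auto. Qed.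

Lemma dpl_cmul (G : R -> R) c x l : derivable_pt_lim G x l -> derivable_pt_lim (fun y => c * G y) x (c * l).
Proof. intros H. apply (dpl_ext (mult_real_fct c G)). intro; reflexivity. apply derivable_pt_lim_scal; auto. Qed.

Lemma dpl_minus (G1 G2 : R -> R) x l1 l2 : derivable_pt_lim G1 x l1 -> derivable_pt_lim G2 x l2 ->
  derivable_pt_lim (fun y => G1 y - G2 y) x (l1 - l2).
Proof. intros. apply (dpl_ext (G1 - G2)%F). intro; reflexivity. apply derivable_pt_lim_minus; auto. Qed.

Lemma Un_cv_ext u v l : (forall n, u n = v n) -> Un_cv u l -> Un_cv v l.
Proof. intros H Hu e He. destruct (Hu e He) as [N HN]. exists N. intros n Hn. rewrite <- H. auto. Qed.

Lemma Un_cv_const c : Un_cv (fun _ => c) c.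
Proof. intros e He. exists O. intros. unfold Rdist. rewrite Rminus_diag, Rabs_R0. auto. Qed.

Lemma Un_cv_bdd0 a b B : (forall n, Rabs (a n) <= B) -> Un_cv b 0 -> Un_cv (fun n => a n * b n) 0.
Proof.
  intros Ha Hb e He. destruct (Hb (e / (Rabs B + 1))) as [N HN].
  { apply Rdiv_lt_0_compat; auto. pose proof (Rabs_pos B); lra. }
  exists N. intros n Hn. specialize (HN n Hn). unfold Rdist in *. rewrite Rminus_0_r in *.
  rewrite Rabs_mult. specialize (Ha n). pose proof (Rabs_pos B). pose proof (Rle_abs B).
  pose proof (Rabs_pos (b n)).
  apply Rle_lt_trans with ((Rabs B + 1) * Rabs (b n)). apply Rmult_le_compat_r; lra.
  apply (Rmult_lt_reg_r (/ (Rabs B + 1))). apply Rinv_0_lt_compat; lra.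
  replace ((Rabs B + 1) * Rabs (b n) * / (Rabs B + 1)) with (Rabs (b n)) by (field; lra). auto.
Qed.

Lemma lim_le u l c eps N0 : Un_cv u l -> (forall p, (N0 <= p)%nat -> Rabs (u p - c) < eps) ->
  Rabs (l - c) <= eps.
Proof.
  intros Hu H. apply Rnot_lt_le. intro Hlt.
  destruct (Hu (Rabs (l - c) - eps)) as [N HN]. lra.
  specialize (HN (Nat.max N N0) ltac:(lia)). specialize (H (Nat.max N N0) ltac:(lia)).
  unfold Rdist in HN.
  assert (Rabs (l - c) <= Rabs (u (Nat.max N N0) - l) + Rabs (u (Nat.max N N0) - c)).
  { replace (l - c) with (- (u (Nat.max N N0) - l) + (u (Nat.max N N0) - c)) by ring.
    eapply Rle_trans. apply Rabs_triang. rewrite Rabs_Ropp. lra. }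
  lra.
Qed.

Lemma zsum_spec a : (exists l, has_zsum a l) -> has_zsum a (zsum a).
Proof. intros H. apply (epsilon_spec (inhabits 0) (fun l => has_zsum a l)). auto. Qed.

Lemma f_bounded f : BV f -> exists B, forall x, Rabs (f x) <= B.
Proof.
  intros [M HM]. exists (Rabs (f 0) + M). intro x.
  assert (Rabs (f x - f 0) <= M).
  { destruct (Rtotal_order x 0) as [Hx|[Hx|Hx]].
    - pose proof (HM 1%nat (fun i => match i with O => x | _ => 0 end)) as H.
      simpl in H. rewrite Rabs_minus_sym. replace (0 + Rabs (f 0 - f x)) with (Rabs (f 0 - f x)) in H by ring.
      apply H. intros i Hi. assert (i = O) by lia. subst. lra.
    - subst. rewrite Rminus_diag, Rabs_R0. specialize (HM O (fun _ => 0) ltac:(intros; lia)). simpl in HM. lra.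
    - pose proof (HM 1%nat (fun i => match i with O => 0 | _ => x end)) as H.
      simpl in H. replace (0 + Rabs (f x - f 0)) with (Rabs (f x - f 0)) in H by ring.
      apply H. intros i Hi. assert (i = O) by lia. subst. lra. }
  replace (f x) with (f 0 + (f x - f 0)) by ring.
  eapply Rle_trans. apply Rabs_triang. lra.
Qed.

Lemma chi_tail chi : chi2 chi -> forall y,
  Un_cv (fun N => chi (y - INR N)) 0 /\ Un_cv (fun N => chi (y + INR N + 1)) 0.
Proof.
  intros [_ HU] y.
  assert (Hs : forall e, 0 < e -> exists N0, forall N, (N0 <= N)%nat ->
     Rabs (chi (y - (INR N + 1))) + Rabs (chi (y + (INR N + 1))) < e).
  { intros e He. destruct (HU y y e He) as [N0 HN0]. exists N0. intros N HN.
    specialize (HN0 (S N) N y ltac:(lia) HN ltac:(lra)).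
    rewrite zpart_S in HN0.
    rewrite opp_IZR, <- INR_IZR_INZ, S_INR in HN0.
    replace (y - - (INR N + 1)) with (y + (INR N + 1)) in HN0 by ring.
    pose proof (Rabs_pos (chi (y - (INR N + 1)))). pose proof (Rabs_pos (chi (y + (INR N + 1)))).
    match type of HN0 with Rabs ?A < _ => replace A with (Rabs (chi (y - (INR N + 1))) + Rabs (chi (y + (INR N + 1)))) in HN0 by ring end.
    rewrite Rabs_right in HN0; lra. }
  split; intros e He; destruct (Hs e He) as [N0 HN0].
  - exists (S N0). intros N HN. destruct N as [|N]; [lia|]. specialize (HN0 N ltac:(lia)).
    unfold Rdist. rewrite Rminus_0_r, S_INR. pose proof (Rabs_pos (chi (y + (INR N + 1)))). lra.
  - exists N0. intros N HN. specialize (HN0 N HN). unfold Rdist. rewrite Rminus_0_r.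
    replace (y + INR N + 1) with (y + (INR N + 1)) by ring.
    pose proof (Rabs_pos (chi (y - (INR N + 1)))). lra.
Qed.

Lemma sbp (phi ch : R -> R) x N :
  zpart (fun k => (phi (IZR k + 1) - phi (IZR k)) * ch (x - IZR k)) N =
  (zpart (fun k => phi (IZR k) * ch (x + 1 - IZR k)) N - zpart (fun k => phi (IZR k) * ch (x - IZR k)) N)
  + (phi (INR N + 1) * ch (x - INR N) - phi (- INR N) * ch (x + INR N + 1)).
Proof.
  induction N.
  - unfold zpart. simpl. replace (0 + 0) with 0 by ring. rewrite !Rminus_0_r, !Rplus_0_l.
    replace (-0) with 0 by ring. rewrite Rplus_0_r. ring.
  - rewrite !zpart_S, IHN. rewrite opp_IZR, <- INR_IZR_INZ, S_INR.
    set (n := INR N).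
    replace (- (n + 1) + 1) with (- n) by ring.
    replace (x - - (n + 1)) with (x + n + 1) by ring.
    replace (x + 1 - (n + 1)) with (x - n) by ring.
    replace (x + 1 - - (n + 1)) with (x + (n + 1) + 1) by ring.
    ring.
Qed.

Lemma Z_ucauchy chi (c : Z -> R) B : chi2 chi -> (forall k, Rabs (c k) <= B) ->
  forall a b eps, 0 < eps -> exists N0, forall N1 N2 u, (N0 <= N1)%nat -> (N0 <= N2)%nat -> a <= u <= b ->
  Rabs (zpart (fun k => c k * chi (u - IZR k)) N1 - zpart (fun k => c k * chi (u - IZR k)) N2) < eps.
Proof.
  intros [_ HU] Hc a b eps He.
  set (B' := Rabs B + 1). assert (HB' : 0 < B') by (unfold B'; pose proof (Rabs_pos B); lra).
  destruct (HU a b (eps / B')) as [N0 HN0]. apply Rdiv_lt_0_compat; auto.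
  exists N0.
  assert (K : forall N1 N2 u, (N0 <= N1)%nat -> (N0 <= N2)%nat -> a <= u <= b -> (N1 <= N2)%nat ->
     Rabs (zpart (fun k => c k * chi (u - IZR k)) N2 - zpart (fun k => c k * chi (u - IZR k)) N1) < eps).
  { intros N1 N2 u H1 H2 Hu Hle.
    eapply Rle_lt_trans. apply (zpart_shell' _ (fun k => B' * Rabs (chi (u - IZR k)))); auto.
    { intro k. rewrite Rabs_mult. apply Rmult_le_compat_r. apply Rabs_pos.
      specialize (Hc k). pose proof (Rle_abs B). unfold B'. lra. }
    rewrite !zpart_scal. specialize (HN0 N2 N1 u H2 H1 Hu).
    rewrite <- Rmult_minus_distr_l.
    apply Rle_lt_trans with (B' * Rabs (zpart (fun k => Rabs (chi (u - IZR k))) N2 -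
                              zpart (fun k => Rabs (chi (u - IZR k))) N1)).
    apply Rmult_le_compat_l; [lra|apply Rle_abs].
    apply (Rmult_lt_reg_r (/ B')). apply Rinv_0_lt_compat; auto.
    replace (B' * Rabs (zpart (fun k => Rabs (chi (u - IZR k))) N2 - zpart (fun k => Rabs (chi (u - IZR k))) N1) * / B')
      with (Rabs (zpart (fun k => Rabs (chi (u - IZR k))) N2 - zpart (fun k => Rabs (chi (u - IZR k))) N1)) by (field; lra).
    exact HN0. }
  intros N1 N2 u H1 H2 Hu. destruct (Nat.le_ge_cases N1 N2).
  - rewrite Rabs_minus_sym. apply K; auto.
  - apply K; auto.
Qed.

Lemma Z_conv chi c B : chi2 chi -> (forall k, Rabs (c k) <= B) -> forall u,
  has_zsum (fun k => c k * chi (u - IZR k)) (zsum (fun k => c k * chi (u - IZR k))).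
Proof.
  intros H2 Hc u. apply zsum_spec.
  destruct (Rcomplete.R_complete (fun N => zpart (fun k => c k * chi (u - IZR k)) N)) as [l Hl].
  { intros e He. destruct (Z_ucauchy chi c B H2 Hc u u e He) as [N0 HN0].
    exists N0. intros n p Hn Hp. unfold Rdist. apply HN0; auto; lra. }
  exists l. exact Hl.
Qed.

Lemma Z_unif chi c B : chi2 chi -> (forall k, Rabs (c k) <= B) ->
  forall a b eps, 0 < eps -> exists N0, forall n u, (N0 <= n)%nat -> a <= u <= b ->
  Rabs (zsum (fun k => c k * chi (u - IZR k)) - zpart (fun k => c k * chi (u - IZR k)) n) < eps.
Proof.
  intros H2 Hc a b eps He.
  destruct (Z_ucauchy chi c B H2 Hc a b (eps / 2)) as [N0 HN0]. lra.
  exists N0. intros n u Hn Hu.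
  assert (Rabs (zsum (fun k => c k * chi (u - IZR k)) - zpart (fun k => c k * chi (u - IZR k)) n) <= eps / 2).
  { apply (lim_le (fun p => zpart (fun k => c k * chi (u - IZR k)) p) _ _ _ N0).
    apply (Z_conv chi c B H2 Hc u).
    intros p Hp. apply HN0; auto. }
  lra.
Qed.



Theorem proposition3p2 (chi f g : R -> R) :
  chi1 chi -> chi2 chi -> AC f -> ae_derivative f g ->
  forall (w : R) (m : nat) (t : R), 0 < w -> (1 <= m)%nat ->
  derivable_pt_lim (Sbar chi m w f) t
    (/ INR m * rsum (fun j => Kw chi w g (t - (INR m - 2 * INR j) / (2 * w))) m).
Proof.
  intros H1 H2 HAC Hder w m t Hw Hm.
  destruct H1 as [Hcont _].
  destruct (PhiM.antideriv chi Hcont) as [Phi HPhi].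
  destruct HAC as [HBV HACl].
  destruct (f_bounded f HBV) as [Bd HBd].
  assert (Hmp : 0 < INR m) by (apply lt_0_INR; lia).
  set (c := fun k : Z => f (IZR k / w)).
  assert (Hc : forall k, Rabs (c k) <= Bd) by (intro; apply HBd).
  set (ZZ := fun N u => zpart (fun k => c k * chi (u - IZR k)) N).
  set (L := fun u => zsum (fun k => c k * chi (u - IZR k))).
  assert (HL : forall u, Un_cv (fun N => ZZ N u) (L u)) by (intro u; apply (Z_conv chi c Bd H2 Hc u)).
  assert (Hcb : forall u, chibar chi m u = / INR m * (Phi (u + INR m / 2) - Phi (u - INR m / 2))).
  { intro u. unfold chibar. f_equal.
    replace (Phi (u + INR m / 2) - Phi (u - INR m / 2)) with
      ((fun v => Phi (u + v)) (INR m / 2) - (fun v => Phi (u + v)) (- INR m / 2)) by (cbv beta; replace (u + - INR m / 2) with (u - INR m / 2) by lra; reflexivity).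
    apply gint_eq. apply (ftc_gauge (fun v => Phi (u + v)) _ (fun _ => False)).
    - lra.
    - intros e He. exists (fun _ => 0), (fun _ => 0). split; [intros; lra|]. split; [intros x []|].
      intro N. rewrite (rsum_ext _ (fun _ => 0)) by (intros; ring). rewrite rsum_0; lra.
    - intros x _. apply (dpl_ext (fun y => Phi (1 * y + u))). intro y; f_equal; ring.
      replace (chi (u + x)) with (chi (1 * x + u) * 1) by (rewrite Rmult_1_r; f_equal; ring).
      apply dpl_affine; auto.
    - left; intros x []. }
  set (W := fun N u => zpart (fun k => c k * Phi (u - IZR k)) N).
  assert (HW' : forall N u, derivable_pt_lim (W N) u (ZZ N u)).
  { intros N u. unfold W, ZZ. apply (dpl_zpart (fun k y => c k * Phi (y - IZR k))).
    intro k. apply dpl_cmul. apply (dpl_ext (fun y => Phi (1 * y + - IZR k))). intro y; f_equal; ring.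
    replace (chi (u - IZR k)) with (chi (1 * u + - IZR k) * 1) by (rewrite Rmult_1_r; f_equal; ring).
    apply dpl_affine; auto. }
  set (fn := fun N y => zpart (fun k => f (IZR k / w) * chibar chi m (w * y - IZR k)) N).
  assert (Hfn : forall N y, fn N y = / INR m * (W N (w * y + INR m / 2) - W N (w * y - INR m / 2))).
  { intros N y. unfold fn, W. rewrite <- zpart_minus, <- zpart_scal. apply zpart_ext. intro k.
    rewrite Hcb. unfold c.
    replace (w * y - IZR k + INR m / 2) with (w * y + INR m / 2 - IZR k) by ring.
    replace (w * y - IZR k - INR m / 2) with (w * y - INR m / 2 - IZR k) by ring. ring. }
  set (fn' := fun N y => / INR m * (ZZ N (w * y + INR m / 2) * w - ZZ N (w * y - INR m / 2) * w)).
  assert (HfnD : forall N y, derivable_pt_lim (fn N) y (fn' N y)).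
  { intros N y. apply (dpl_ext (fun y => / INR m * (W N (w * y + INR m / 2) - W N (w * y - INR m / 2)))).
    intro; symmetry; apply Hfn.
    apply dpl_cmul. apply dpl_minus.
    - apply (dpl_affine (W N) (ZZ N)). intro; apply HW'.
    - apply (dpl_ext (fun y => W N (w * y + - (INR m / 2)))). intro; reflexivity.
      apply (dpl_affine (W N) (ZZ N)). intro; apply HW'. }
  set (g' := fun y => / INR m * (L (w * y + INR m / 2) * w - L (w * y - INR m / 2) * w)).
  set (d1 := mkposreal 1 Rlt_0_1).
  set (lo := w * t - w - INR m). set (hi := w * t + w + INR m).
  assert (Hrange : forall y v, Boule t d1 y -> - INR m / 2 <= v <= INR m / 2 -> lo <= w * y + v <= hi).
  { intros y v Hy Hv. unfold Boule in Hy. simpl in Hy. apply Rabs_def2 in Hy. unfold lo, hi.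
    split; nra. }
  assert (HCVU : CVU fn' g' t d1).
  { intros eps He.
    destruct (Z_unif chi c Bd H2 Hc lo hi (eps * INR m / (4 * w))) as [N0 HN0].
    { apply Rdiv_lt_0_compat; [nra|lra]. }
    exists N0. intros n y Hn Hy.
    assert (A1 := HN0 n (w * y + INR m / 2) Hn ltac:(apply Hrange; auto; lra)).
    assert (A2 := HN0 n (w * y + - (INR m / 2)) Hn ltac:(apply Hrange; auto; lra)).
    unfold g', fn'. fold (L (w * y + INR m / 2)).
    replace (/ INR m * (L (w * y + INR m / 2) * w - L (w * y - INR m / 2) * w) -
             / INR m * (ZZ n (w * y + INR m / 2) * w - ZZ n (w * y - INR m / 2) * w)) with
      ((/ INR m * w) * ((L (w * y + INR m / 2) - ZZ n (w * y + INR m / 2)) -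
                        (L (w * y + - (INR m / 2)) - ZZ n (w * y + - (INR m / 2))))) by (unfold Rminus; ring).
    rewrite Rabs_mult. assert (Hk : 0 < / INR m * w) by (apply Rmult_lt_0_compat; auto; apply Rinv_0_lt_compat; auto).
    rewrite (Rabs_right (/ INR m * w)) by lra.
    set (A := L (w * y + INR m / 2) - ZZ n (w * y + INR m / 2)) in *.
    set (B := L (w * y + - (INR m / 2)) - ZZ n (w * y + - (INR m / 2))) in *.
    assert (Rabs (A - B) < 2 * (eps * INR m / (4 * w))).
    { unfold Rminus at 1. eapply Rle_lt_trans. apply Rabs_triang. rewrite Rabs_Ropp. unfold A, B, L, ZZ. lra. }
    apply Rlt_trans with (/ INR m * w * (2 * (eps * INR m / (4 * w)))).
    apply Rmult_lt_compat_l; auto.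
    replace (/ INR m * w * (2 * (eps * INR m / (4 * w)))) with (eps / 2) by (field; lra). lra. }
  assert (Hpt : forall y, Boule t d1 y -> Un_cv (fun N => fn N y) (Sbar chi m w f y)).
  { intros y Hy.
    destruct (Rcomplete.R_complete (fun N => fn N y)) as [l Hl].
    { intros e He. destruct (Z_ucauchy chi c Bd H2 Hc lo hi e He) as [N0 HN0].
      exists N0. intros N1 N2 HN1 HN2. unfold Rdist.
      rewrite !Hfn.
      destruct (MVT_cor2 (fun v => W N1 v - W N2 v) (fun v => ZZ N1 v - ZZ N2 v)
                 (w * y - INR m / 2) (w * y + INR m / 2)) as [xi [Hxi1 Hxi2]].
      { lra. }
      { intros v _. apply dpl_minus; apply HW'. }
      replace (/ INR m * (W N1 (w * y + INR m / 2) - W N1 (w * y - INR m / 2)) -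
               / INR m * (W N2 (w * y + INR m / 2) - W N2 (w * y - INR m / 2))) with
        (/ INR m * (W N1 (w * y + INR m / 2) - W N2 (w * y + INR m / 2) -
                   (W N1 (w * y - INR m / 2) - W N2 (w * y - INR m / 2)))) by ring.
      rewrite Hxi1.
      replace (/ INR m * ((ZZ N1 xi - ZZ N2 xi) * (w * y + INR m / 2 - (w * y - INR m / 2))))
        with (ZZ N1 xi - ZZ N2 xi) by (field; lra).
      apply HN0; auto.
      destruct (Hrange y (- INR m / 2) Hy ltac:(lra)). destruct (Hrange y (INR m / 2) Hy ltac:(lra)).
      split; lra. }
    assert (Sbar chi m w f y = l) by (apply zsum_unique; exact Hl).
    rewrite H. exact Hl. }
  assert (Hc0 : Boule t d1 t) by (unfold Boule; rewrite Rminus_diag, Rabs_R0; simpl; lra).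
  pose proof (CVU_derivable fn fn' (Sbar chi m w f) g' t d1 HCVU Hpt (fun n x _ => HfnD n x) t Hc0) as HD.
  destruct Hder as [E [HEn HEd]].
  assert (Hgint : forall k, gint g (IZR k / w) ((IZR k + 1) / w) = f ((IZR k + 1) / w) - f (IZR k / w)).
  { intro k. assert (Hle : IZR k / w <= (IZR k + 1) / w).
    { unfold Rdiv. apply Rmult_le_compat_r; [left; apply Rinv_0_lt_compat; auto|lra]. }
    apply gint_eq. apply (ftc_gauge f g E); auto. right. exact (HACl _ _ Hle). }
  set (phi := fun r => f (r / w)).
  assert (HKw : forall s, Kw chi w g s = w * (L (w * s + 1) - L (w * s))).
  { intro s. unfold Kw. apply zsum_unique. unfold has_zsum.
    set (x := w * s).
    destruct (chi_tail chi H2 x) as [T1 T2].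
    apply (Un_cv_ext (fun N => w * ((ZZ N (x + 1) - ZZ N x) +
         (phi (INR N + 1) * chi (x - INR N) - phi (- INR N) * chi (x + INR N + 1))))).
    { intro N. symmetry.
      rewrite (zpart_ext _ (fun k => w * ((phi (IZR k + 1) - phi (IZR k)) * chi (x - IZR k)))).
      2:{ intro k. rewrite Hgint. unfold phi. ring. }
      rewrite zpart_scal, sbp. reflexivity. }
    replace (w * (L (x + 1) - L x)) with (w * ((L (x + 1) - L x) + (0 - 0))) by ring.
    apply (CV_mult (fun _ => w)). apply Un_cv_const.
    apply CV_plus. apply CV_minus; apply HL.
    apply CV_minus.
    - apply (Un_cv_bdd0 _ _ Bd); auto. intro; apply HBd.
    - apply (Un_cv_bdd0 _ _ Bd); auto. intro; apply HBd. }
  replace (/ INR m * rsum (fun j => Kw chi w g (t - (INR m - 2 * INR j) / (2 * w))) m) with (g' t).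
  exact HD.
  set (x0 := w * t - INR m / 2).
  rewrite (rsum_ext _ (fun j => w * (L (x0 + INR (S j)) - L (x0 + INR j)))).
  2:{ intros j _. rewrite HKw. rewrite S_INR.
      replace (w * (t - (INR m - 2 * INR j) / (2 * w))) with (x0 + INR j) by (unfold x0; field; lra).
      replace (x0 + (INR j + 1)) with (x0 + INR j + 1) by ring. reflexivity. }
  rewrite rsum_scal, (rsum_tele (fun j => L (x0 + INR j))).
  unfold g'. simpl INR at 2. rewrite Rplus_0_r.
  replace (x0 + INR m) with (w * t + INR m / 2) by (unfold x0; field).
  unfold x0. ring.
Qed.
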